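(* Let $G$ be a torsion-free virtually nilpotent group and let $N \unlhd G$ be a maximal normal finite index nilpotent subgroup. Then every finite conjugacy class of $G$ is contained in $\mathcal{Z}(N)$. Consequently the FC-centre of $G$ equals $\mathcal{Z}(N)$.
   Context: The FC-centre of $G$ is the set of elements of $G$ whose conjugacy class in $G$ is finite. $\mathcal{Z}(N)$ denotes the centre of $N$. *)

(* Defs.v *)
From Stdlib Require Import List.

Record group := Group {
  carrier :> Type;
  gmul : carrier -> carrier -> carrier;
  ginv : carrier -> carrier;
  gone : carrier;
  gmulA : forall x y z, gmul x (gmul y z) = gmul (gmul x y) z;
  gmul1 : forall x, gmul gone x = x;
  gmulV : forall x, gmul (ginv x) x = gone
}.

Arguments gmul {g} _ _.
Arguments ginv {g} _.
Arguments gone {g}.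

Section Defs.
Variable G : group.

Definition subset (A B : G -> Prop) : Prop := forall x, A x -> B x.

Definition is_subgroup (H : G -> Prop) : Prop :=
  H gone /\ (forall x y, H x -> H y -> H (gmul x y)) /\ (forall x, H x -> H (ginv x)).

Definition conj (x g : G) : G := gmul (ginv g) (gmul x g).

Definition is_normal (H : G -> Prop) : Prop :=
  is_subgroup H /\ forall x g, H x -> H (conj x g).

(* H has finite index: finitely many left cosets g_i H cover G *)
Definition finite_index (H : G -> Prop) : Prop :=
  exists l : list G, forall g, exists t, In t l /\ H (gmul (ginv t) g).

Definition comm (x y : G) : G := gmul (ginv x) (gmul (ginv y) (gmul x y)).

Definition gen (S : G -> Prop) : G -> Prop :=
  fun x => forall K, is_subgroup K -> subset S K -> K x.

Fixpoint lcs (N : G -> Prop) (i : nat) : G -> Prop :=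
  match i with
  | O => N
  | S j => gen (fun z => exists x y, lcs N j x /\ N y /\ z = comm x y)
  end.

Definition nilpotent (N : G -> Prop) : Prop :=
  is_subgroup N /\ exists c, forall x, lcs N c x -> x = gone.

Fixpoint gpow (x : G) (n : nat) : G :=
  match n with O => gone | S m => gmul x (gpow x m) end.

Definition torsion_free : Prop :=
  forall (x : G) (n : nat), gpow x (S n) = gone -> x = gone.

Definition virtually_nilpotent : Prop :=
  exists H, nilpotent H /\ finite_index H.

Definition nfn (N : G -> Prop) : Prop :=
  is_normal N /\ finite_index N /\ nilpotent N.

Definition maximal_nfn (N : G -> Prop) : Prop :=
  nfn N /\ forall M, nfn M -> subset N M -> subset M N.

Definition finite_class (x : G) : Prop :=
  exists l : list G, forall g, In (conj x g) l.

Definition FC_centre : G -> Prop := finite_class.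

Definition centre (N : G -> Prop) : G -> Prop :=
  fun x => N x /\ forall y, N y -> gmul x y = gmul y x.

End Defs.

(* Main.v *)
Require Import Defs.
From Stdlib Require Import Arith List Lia Classical ClassicalEpsilon Permutation FinFun.

Section Main.
Variable G : group.
Local Notation "x * y" := (@gmul G x y).

Lemma mulA' (x y z : G) : (x * y) * z = x * (y * z). Proof. symmetry; apply gmulA. Qed.
Lemma mul1l (x : G) : gone * x = x. Proof. apply gmul1. Qed.
Lemma mulVl (x : G) : ginv x * x = gone. Proof. apply gmulV. Qed.
Lemma mulVl_r (x y : G) : ginv x * (x * y) = y.
Proof. rewrite gmulA, mulVl, mul1l; reflexivity. Qed.
Lemma mulVr (x : G) : x * ginv x = gone.
Proof.
  assert (H: (x * ginv x) * (x * ginv x) = x * ginv x).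
  { rewrite mulA', (gmulA _ (ginv x) x), mulVl, mul1l. reflexivity. }
  rewrite <- (mulVl_r (x * ginv x) (x * ginv x)) at 1. rewrite H. apply mulVl.
Qed.
Lemma mul1r (x : G) : x * gone = x.
Proof. rewrite <- (mulVl x), gmulA, mulVr, mul1l. reflexivity. Qed.
Lemma mulVr_r (x y : G) : x * (ginv x * y) = y.
Proof. rewrite gmulA, mulVr, mul1l; reflexivity. Qed.
Lemma inv_uniq (x y : G) : x * y = gone -> ginv x = y.
Proof. intros H. rewrite <- (mulVl_r x y), H, mul1r. reflexivity. Qed.
Lemma invK (x : G) : ginv (ginv x) = x.
Proof. apply inv_uniq, mulVl. Qed.
Lemma inv_mul (x y : G) : ginv (x * y) = ginv y * ginv x.
Proof. apply inv_uniq. rewrite mulA', mulVr_r, mulVr. reflexivity. Qed.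
Lemma inv1 : ginv (@gone G) = gone.
Proof. apply inv_uniq, mul1l. Qed.

Hint Rewrite mulA' mul1l mul1r mulVl mulVr mulVl_r mulVr_r invK inv_mul inv1 : grp.
Ltac gs := unfold conj, comm; autorewrite with grp.

Lemma commute_inv (a b : G) : a * b = b * a -> ginv a * b = b * ginv a.
Proof.
  intros H. transitivity (ginv a * ((b * a) * ginv a)). { gs; reflexivity. }
  rewrite <- H. gs; reflexivity.
Qed.

Lemma gpow_add (x : G) m n : gpow G x (m + n) = gpow G x m * gpow G x n.
Proof. induction m; cbn [gpow Nat.add]. - gs; reflexivity. - rewrite IHm; gs; reflexivity. Qed.
Lemma gpow_comm1 (x : G) n : x * gpow G x n = gpow G x n * x.
Proof.
  induction n; cbn [gpow]. - gs; reflexivity.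
  - rewrite mulA', <- IHn. reflexivity.
Qed.
Lemma commute_pow (a b : G) n : a * b = b * a -> gpow G a n * b = b * gpow G a n.
Proof.
  intros H; induction n; cbn [gpow]. - gs; reflexivity.
  - rewrite mulA', IHn, gmulA, H, mulA'. reflexivity.
Qed.
Lemma gpow_mul_comm (a b : G) n : a * b = b * a -> gpow G (a * b) n = gpow G a n * gpow G b n.
Proof.
  intros H; induction n; cbn [gpow]. - gs; reflexivity.
  - rewrite IHn, !mulA'. f_equal. rewrite !gmulA. f_equal.
    symmetry. apply commute_pow. exact H.
Qed.
Lemma gpow_inv (b : G) n : gpow G (ginv b) n = ginv (gpow G b n).
Proof.
  induction n; cbn [gpow]. - gs; reflexivity.
  - rewrite IHn, gpow_comm1, inv_mul. reflexivity.
Qed.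
Lemma gpow_one n : gpow G gone n = gone.
Proof. induction n; cbn [gpow]; [reflexivity| rewrite IHn; apply mul1l]. Qed.
Lemma conj_pow (x g : G) n : gpow G (conj G x g) n = conj G (gpow G x n) g.
Proof.
  induction n; cbn [gpow]. - gs; reflexivity.
  - rewrite IHn. gs. reflexivity.
Qed.

Lemma commute_root (TF : torsion_free G) (a b : G) k :
  a * b = b * a -> gpow G a (S k) = gpow G b (S k) -> a = b.
Proof.
  intros H Hp.
  assert (Hw : gpow G (a * ginv b) (S k) = gone).
  { rewrite gpow_mul_comm. rewrite gpow_inv, <- Hp. apply mulVr.
    symmetry; apply commute_inv; symmetry; exact H. }
  apply TF in Hw. transitivity ((a * ginv b) * b). { gs; reflexivity. }
  rewrite Hw. apply mul1l.
Qed.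

Lemma sg1 (H : G -> Prop) : is_subgroup G H -> H gone.
Proof. intros [h _]; exact h. Qed.
Lemma sgM (H : G -> Prop) x y : is_subgroup G H -> H x -> H y -> H (x * y).
Proof. intros (_&h&_); auto. Qed.
Lemma sgV (H : G -> Prop) x : is_subgroup G H -> H x -> H (ginv x).
Proof. intros (_&_&h); auto. Qed.
Lemma sg_conj (H : G -> Prop) x g : is_subgroup G H -> H x -> H g -> H (conj G x g).
Proof. intros HH Hx Hg. unfold conj. apply sgM; [|apply sgV|apply sgM]; auto. Qed.
Lemma sg_comm (H : G -> Prop) x y : is_subgroup G H -> H x -> H y -> H (comm G x y).
Proof. intros HH Hx Hy. unfold comm. repeat first [apply sgM | apply sgV]; auto. Qed.
Lemma sg_pow (H : G -> Prop) x n : is_subgroup G H -> H x -> H (gpow G x n).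
Proof. intros HH Hx; induction n; cbn [gpow]; [apply sg1 | apply sgM]; auto. Qed.

Lemma gen_sub S : subset G S (gen G S).
Proof. intros x Hx K HK HS. apply HS, Hx. Qed.
Lemma gen_sg S : is_subgroup G (gen G S).
Proof.
  split; [|split].
  - intros K HK _. apply sg1; exact HK.
  - intros x y Hx Hy K HK HS. apply sgM; [exact HK|apply Hx|apply Hy]; assumption.
  - intros x Hx K HK HS. apply sgV; [exact HK|apply Hx]; assumption.
Qed.
Lemma gen_min S K : is_subgroup G K -> subset G S K -> subset G (gen G S) K.
Proof. intros HK HS x Hx; apply Hx; auto. Qed.

Lemma lcs_sg H j : is_subgroup G H -> is_subgroup G (lcs G H j).
Proof. destruct j; [auto | intros; apply gen_sg]. Qed.
Lemma lcs_sub H j : is_subgroup G H -> subset G (lcs G H j) H.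
Proof.
  intros HH; induction j; intros x Hx; [exact Hx|].
  apply (Hx H HH). intros z (a&b&Ha&Hb&->). apply sg_comm; auto.
Qed.
Lemma lcs_gen H j x y : lcs G H j x -> H y -> lcs G H (S j) (comm G x y).
Proof. intros Hx Hy. apply gen_sub. exists x, y; auto. Qed.

Lemma conj_mul (x y g : G) : conj G (x * y) g = conj G x g * conj G y g.
Proof. gs; reflexivity. Qed.
Lemma conj_inv (x g : G) : conj G (ginv x) g = ginv (conj G x g).
Proof. gs; reflexivity. Qed.
Lemma conj1 (g : G) : conj G gone g = gone.
Proof. gs; reflexivity. Qed.
Lemma conj_comm (x y g : G) : conj G (comm G x y) g = comm G (conj G x g) (conj G y g).
Proof. gs; reflexivity. Qed.
Lemma conj_cmp (x p q : G) : conj G x (p * q) = conj G (conj G x p) q.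
Proof. gs; reflexivity. Qed.
Lemma conj_back (m g : G) : conj G (conj G m (ginv g)) g = m.
Proof. gs; reflexivity. Qed.
Lemma conj_inj (x y g : G) : conj G x g = conj G y g -> x = y.
Proof.
  intros E. transitivity (g * (conj G x g * ginv g)). { gs; reflexivity. }
  rewrite E. gs; reflexivity.
Qed.

Lemma lcs_normal H j x h : is_subgroup G H -> lcs G H j x -> H h -> lcs G H j (conj G x h).
Proof.
  intros HH; revert x; induction j; intros x Hx Hh.
  - apply sg_conj; auto.
  - apply (Hx (fun z => lcs G H (S j) (conj G z h))).
    + split; [|split].
      * rewrite conj1. apply sg1, lcs_sg; auto.
      * intros a b Ha Hb. rewrite conj_mul. apply sgM; auto. apply lcs_sg; auto.
      * intros a Ha. rewrite conj_inv. apply sgV; auto. apply lcs_sg; auto.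
    + intros z (a&b&Ha&Hb&->). rewrite conj_comm. apply lcs_gen; auto.
      apply sg_conj; auto.
Qed.

Lemma lcs_triv_S H j : (forall x, lcs G H j x -> x = gone) -> forall x, lcs G H (S j) x -> x = gone.
Proof.
  intros Ht x Hx. apply (Hx (fun z => z = gone)).
  - split; [reflexivity|split].
    + intros a b -> ->. apply mul1l.
    + intros a ->. apply inv1.
  - intros z (a&b&Ha&Hb&->). rewrite (Ht a Ha). gs; reflexivity.
Qed.

Lemma comm_1r (u : G) : comm G u gone = gone. Proof. gs; reflexivity. Qed.
Lemma comm_mul (u v w : G) : comm G u (v * w) = comm G u w * conj G (comm G u v) w.
Proof. gs; reflexivity. Qed.
Lemma comm_inv (u v : G) : comm G u (ginv v) = ginv (conj G (comm G u v) (ginv v)).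
Proof. gs; reflexivity. Qed.
Lemma comm_sym (u v : G) : comm G v u = ginv (comm G u v).
Proof. gs; reflexivity. Qed.
Lemma comm_self (u : G) : comm G u u = gone.
Proof. gs; reflexivity. Qed.
Lemma comm_conj (a b : G) : comm G a (conj G a b) = ginv (comm G (comm G a b) a).
Proof. gs; reflexivity. Qed.
Lemma comm_1_commute (u v : G) : comm G u v = gone -> u * v = v * u.
Proof.
  intros H. transitivity ((v * u) * comm G u v). { gs; reflexivity. }
  rewrite H, mul1r. reflexivity.
Qed.
Lemma commute_comm (u v : G) : u * v = v * u -> comm G u v = gone.
Proof. intros H. unfold comm. rewrite H. gs; reflexivity. Qed.

Lemma cen_sg (H D : G -> Prop) u : is_subgroup G H -> is_subgroup G D ->
  (forall d h, D d -> H h -> D (conj G d h)) ->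
  is_subgroup G (fun v => H v /\ D (comm G u v)).
Proof.
  intros HH HD HDn. split; [|split].
  - split; [apply sg1; auto| rewrite comm_1r; apply sg1; auto].
  - intros v w [Hv Dv] [Hw Dw]. split; [apply sgM; auto|].
    rewrite comm_mul. apply sgM; auto.
  - intros v [Hv Dv]. split; [apply sgV; auto|].
    rewrite comm_inv. apply sgV; auto. apply HDn; auto. apply sgV; auto.
Qed.

Theorem uroot (TF : torsion_free G) c : forall H, is_subgroup G H ->
  (forall x, lcs G H (S c) x -> x = gone) ->
  forall a b k, H a -> H b -> gpow G a (S k) = gpow G b (S k) -> a = b.
Proof.
  induction c as [|c IHc]; intros H HH Ht a b k Ha Hb Hp.
  - apply (commute_root TF a b k); [|exact Hp].
    apply comm_1_commute, Ht, lcs_gen; auto.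
  - assert (Ha' : H (conj G a b)) by (apply sg_conj; auto).
    assert (Hp' : gpow G a (S k) = gpow G (conj G a b) (S k)).
    { rewrite conj_pow, Hp. unfold conj. rewrite <- gpow_comm1, mulVl_r. reflexivity. }
    pose (K := gen G (fun z => z = a \/ z = conj G a b)).
    assert (HK : is_subgroup G K) by apply gen_sg.
    assert (HKH : subset G K H).
    { apply gen_min; auto. intros z [->| ->]; auto. }
    assert (HD : is_subgroup G (lcs G H 2)) by (apply lcs_sg; auto).
    assert (HDn : forall d h, lcs G H 2 d -> H h -> lcs G H 2 (conj G d h))
      by (intros; apply lcs_normal; auto).
    assert (Hg : lcs G H 2 (comm G a (conj G a b))).
    { rewrite comm_conj. apply sgV; auto. apply lcs_gen; auto. apply lcs_gen; auto. }
    assert (Hcomm : forall u v, K u -> K v -> lcs G H 2 (comm G u v)).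
    { assert (Ca : subset G K (fun v => H v /\ lcs G H 2 (comm G a v))).
      { apply gen_min. apply cen_sg; auto.
        intros z [->| ->]; split; auto. rewrite comm_self; apply sg1; auto. }
      assert (Ca' : subset G K (fun v => H v /\ lcs G H 2 (comm G (conj G a b) v))).
      { apply gen_min. apply cen_sg; auto.
        intros z [->| ->]; split; auto.
        - rewrite comm_sym. apply sgV; auto.
        - rewrite comm_self; apply sg1; auto. }
      intros u v Hu Hv.
      assert (Cu : subset G K (fun v => H v /\ lcs G H 2 (comm G u v))).
      { apply gen_min. apply cen_sg; auto.
        intros z [->| ->]; split; auto.
        - rewrite comm_sym. apply sgV; auto. apply Ca; auto.
        - rewrite comm_sym. apply sgV; auto. apply Ca'; auto. }
      apply Cu; auto. }
    assert (HL : forall j x, lcs G K (S j) x -> lcs G H (S (S j)) x).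
    { induction j; intros x Hx.
      - apply (Hx (lcs G H 2)); auto. intros z (p&q&Hp0&Hq&->). apply Hcomm; auto.
      - apply (Hx (lcs G H (S (S (S j))))). apply lcs_sg; auto.
        intros z (p&q&Hp0&Hq&->). apply lcs_gen; auto. }
    assert (E : a = conj G a b).
    { apply (IHc K HK (fun x Hx => Ht x (HL c x Hx)) a (conj G a b) k); auto;
        apply gen_sub; auto. }
    apply (commute_root TF a b k); [|exact Hp].
    assert (E2 : b * conj G a b = a * b) by (unfold conj; apply mulVr_r).
    rewrite <- E in E2. symmetry; exact E2.
Qed.

Lemma pigeon {A : Type} (f : nat -> A) (l : list A) :
  (forall i, In (f i) l) -> exists i d, f i = f (S d + i).
Proof.
  intros Hf. apply NNPP; intro Hn.
  assert (Hinj : Injective f).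
  { intros i j E. destruct (Nat.lt_trichotomy i j) as [h|[h|h]]; auto; exfalso; apply Hn.
    - exists i, (j - S i). replace (S (j - S i) + i) with j by lia. exact E.
    - exists j, (i - S j). replace (S (i - S j) + j) with i by lia. symmetry; exact E. }
  assert (Hnd : NoDup (map f (seq 0 (S (length l))))).
  { apply Injective_map_NoDup; [exact Hinj | apply seq_NoDup]. }
  assert (Hinc : incl (map f (seq 0 (S (length l)))) l).
  { intros y Hy. apply in_map_iff in Hy. destruct Hy as (i&<-&_). apply Hf. }
  pose proof (NoDup_incl_length Hnd Hinc) as Hl.
  rewrite length_map, length_seq in Hl. lia.
Qed.

Lemma fc_centralizes (TF : torsion_free G) (N : G -> Prop) :
  is_normal G N -> nilpotent G N ->
  forall x, finite_class G x -> forall y, N y -> x * y = y * x.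
Proof.
  intros [HN Hnorm] [_ [c Hc]] x [l Hl] y Hy.
  destruct (pigeon (fun i => conj G x (gpow G y i)) l (fun i => Hl _)) as (i&d&E).
  cbv beta in E. rewrite gpow_add, conj_cmp in E. apply conj_inj in E.
  assert (Hq : x * gpow G y (S d) = gpow G y (S d) * x).
  { rewrite E at 2. unfold conj. rewrite mulVr_r. reflexivity. }
  assert (Hy' : N (conj G y x)) by (apply Hnorm; auto).
  assert (Hp : gpow G (conj G y x) (S d) = gpow G y (S d)).
  { rewrite conj_pow. unfold conj. rewrite <- Hq, mulVl_r. reflexivity. }
  pose proof (uroot TF c N HN (lcs_triv_S N c Hc) _ _ d Hy' Hy Hp) as E2.
  transitivity (x * conj G y x). { rewrite E2; reflexivity. }
  unfold conj. apply mulVr_r.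
Qed.

Definition prod (l : list G) : G := fold_right (fun a b => a * b) gone l.

Section Transfer.
Variables (C Z : G -> Prop) (T : list G).
Hypotheses (HC : is_subgroup G C) (HZ : is_subgroup G Z) (HZC : forall z, Z z -> C z)
  (Hcen : forall z c, Z z -> C c -> z * c = c * z)
  (HTC : forall t, In t T -> C t) (HTnd : NoDup T)
  (HTineq : forall t t', In t T -> In t' T -> Z (ginv t * t') -> t = t')
  (HTcov : forall c, C c -> exists t, In t T /\ Z (ginv t * c)).

Lemma Zconj z c : Z z -> C c -> conj G z c = z.
Proof. intros Hz Hc. unfold conj. rewrite (Hcen z c) by auto. apply mulVl_r. Qed.

Definition rep (c : G) : G := epsilon (inhabits (@gone G)) (fun t => In t T /\ Z (ginv t * c)).
Lemma rep_spec c : C c -> In (rep c) T /\ Z (ginv (rep c) * c).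
Proof. intros Hc. unfold rep. apply epsilon_spec. apply HTcov; auto. Qed.
Lemma rep_uniq c t : C c -> In t T -> Z (ginv t * c) -> rep c = t.
Proof.
  intros Hc Ht Hz. destruct (rep_spec c Hc) as [h1 h2]. apply HTineq; auto.
  replace (ginv (rep c) * t) with ((ginv (rep c) * c) * ginv (ginv t * c)) by (gs; reflexivity).
  apply sgM; auto. apply sgV; auto.
Qed.

Definition zz (t g : G) := ginv (rep (t * g)) * (t * g).
Lemma zz_Z t g : In t T -> C g -> Z (zz t g).
Proof. intros Ht Hg. apply rep_spec. apply sgM; auto. Qed.

Lemma zz_mul t g h : In t T -> C g -> C h -> zz t (g * h) = zz t g * zz (rep (t * g)) h.
Proof.
  intros Ht Hg Hh.
  destruct (rep_spec (t * g)) as [Hs Hz1]; [apply sgM; auto|].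
  destruct (rep_spec (rep (t * g) * h)) as [Hr Hz2]; [apply sgM; auto|].
  unfold zz.
  set (s := rep (t * g)) in *. set (r := rep (s * h)) in *.
  set (z1 := ginv s * (t * g)) in *. set (z2 := ginv r * (s * h)) in *.
  assert (Cl : ginv r * (t * (g * h)) = z1 * z2).
  { transitivity (ginv r * ((s * z1) * h)). { unfold z1; gs; reflexivity. }
    rewrite <- (Hcen z1 s) by auto. rewrite mulA', gmulA.
    rewrite <- (Hcen z1 (ginv r)) by (auto; apply sgV; auto). rewrite mulA'. reflexivity. }
  rewrite (rep_uniq (t * (g * h)) r).
  - exact Cl.
  - repeat (apply sgM; auto).
  - exact Hr.
  - rewrite Cl. apply sgM; auto.
Qed.

Lemma prod_Z l : (forall x, In x l -> Z x) -> Z (prod l).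
Proof.
  induction l; simpl; intros H. - apply sg1; auto.
  - apply sgM; auto.
Qed.

Lemma prod_perm l1 l2 : Permutation l1 l2 -> (forall x, In x l1 -> Z x) -> prod l1 = prod l2.
Proof.
  induction 1 as [|x l l' P IH|x y l|l l' l'' P1 IH1 P2 IH2]; intros Hz; simpl.
  - reflexivity.
  - f_equal; apply IH; intros; apply Hz; right; auto.
  - rewrite !gmulA. f_equal. apply Hcen; [apply Hz; left; auto | apply HZC, Hz; right; left; auto].
  - rewrite IH1, IH2; auto. intros z Hz'. apply Hz.
    apply Permutation_in with l'; auto. apply Permutation_sym; auto.
Qed.

Lemma prod_map_mul {A : Type} (f g : A -> G) l : (forall a, In a l -> Z (f a) /\ Z (g a)) ->
  prod (map (fun a => f a * g a) l) = prod (map f l) * prod (map g l).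
Proof.
  induction l as [|a l IH]; simpl; intros H.
  - rewrite mul1l; reflexivity.
  - rewrite IH by auto. rewrite !mulA'. f_equal. rewrite !gmulA. f_equal.
    apply Hcen. apply H; auto. apply HZC, prod_Z. intros x Hx.
    apply in_map_iff in Hx. destruct Hx as (b&<-&Hb). apply H; auto.
Qed.

Lemma prod_const (z : G) (l : list G) : prod (map (fun _ => z) l) = gpow G z (length l).
Proof. induction l; simpl; congruence. Qed.

Definition V (g : G) := prod (map (fun t => zz t g) T).

Lemma V_Z g : C g -> Z (V g).
Proof.
  intros Hg. apply prod_Z. intros x Hx. apply in_map_iff in Hx.
  destruct Hx as (t&<-&Ht). apply zz_Z; auto.
Qed.

Lemma perm_rep g : C g -> Permutation (map (fun t => rep (t * g)) T) T.
Proof.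
  intros Hg. apply Permutation_map_same_l.
  - apply Injective_map_NoDup_in.
    + intros t t' Ht Ht' E.
      destruct (rep_spec (t * g)) as [_ Hz]; [apply sgM; auto|].
      destruct (rep_spec (t' * g)) as [_ Hz']; [apply sgM; auto|].
      rewrite E in Hz.
      symmetry. apply HTineq; auto.
      assert (Hw : Z (conj G (ginv t' * t) g)).
      { replace (conj G (ginv t' * t) g) with
          (ginv (ginv (rep (t' * g)) * (t' * g)) * (ginv (rep (t' * g)) * (t * g)))
          by (gs; reflexivity).
        apply sgM; auto. apply sgV; auto. }
      replace (ginv t' * t) with (conj G (conj G (ginv t' * t) g) (ginv g)) by (gs; reflexivity).
      rewrite Zconj; auto. apply sgV; auto.
    + exact HTnd.
  - intros x Hx. apply in_map_iff in Hx. destruct Hx as (t&<-&Ht). apply rep_spec, sgM; auto.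
Qed.

Lemma V_mul g h : C g -> C h -> V (g * h) = V g * V h.
Proof.
  intros Hg Hh. unfold V.
  rewrite (map_ext_in _ (fun t => zz t g * zz (rep (t * g)) h)) by (intros; apply zz_mul; auto).
  rewrite prod_map_mul.
  2:{ intros a Ha. split; apply zz_Z; auto. apply rep_spec, sgM; auto. }
  f_equal.
  replace (map (fun t => zz (rep (t * g)) h) T)
    with (map (fun s => zz s h) (map (fun t => rep (t * g)) T)) by (rewrite map_map; reflexivity).
  apply prod_perm.
  - apply Permutation_map, perm_rep; auto.
  - intros x Hx. apply in_map_iff in Hx. destruct Hx as (s&<-&Hs).
    apply in_map_iff in Hs. destruct Hs as (t&<-&Ht). apply zz_Z; auto.
    apply rep_spec, sgM; auto.
Qed.

Lemma V_Zelt z : Z z -> V z = gpow G z (length T).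
Proof.
  intros Hz. unfold V.
  rewrite (map_ext_in _ (fun _ => z)).
  - apply prod_const.
  - intros t Ht. unfold zz. rewrite (rep_uniq (t * z) t); auto.
    + apply mulVl_r.
    + apply sgM; auto.
    + rewrite mulVl_r; auto.
Qed.

Lemma V_one : V gone = gone.
Proof. rewrite V_Zelt. apply gpow_one. apply sg1; auto. Qed.

Lemma V_inv g : C g -> V (ginv g) = ginv (V g).
Proof.
  intros Hg. symmetry. apply inv_uniq. rewrite <- V_mul; auto.
  rewrite mulVr. apply V_one. apply sgV; auto.
Qed.

Lemma V_pow g n : C g -> V (gpow G g n) = gpow G (V g) n.
Proof.
  intros Hg. induction n; cbn [gpow]. - apply V_one.
  - rewrite V_mul; auto. rewrite IHn; reflexivity. apply sg_pow; auto.
Qed.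

Theorem C_abelian (TF : torsion_free G) a b : C a -> C b -> a * b = b * a.
Proof.
  intros Ha Hb. apply comm_1_commute.
  assert (Cw : C (comm G a b)) by (apply sg_comm; auto).
  assert (Vw : V (comm G a b) = gone).
  { unfold comm.
    assert (C (ginv a)) by (apply sgV; auto). assert (C (ginv b)) by (apply sgV; auto).
    rewrite (V_mul (ginv a)) by (auto; repeat apply sgM; auto).
    rewrite (V_mul (ginv b)) by (auto; repeat apply sgM; auto).
    rewrite (V_mul a b) by auto.
    rewrite !V_inv by auto.
    rewrite (Hcen (V a) (V b)) by (try apply HZC; apply V_Z; auto).
    gs; reflexivity. }
  set (w := comm G a b) in *.
  destruct (pigeon (fun i => rep (gpow G w i)) T) as (i&d&E).
  { intros i. apply rep_spec, sg_pow; auto. }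
  cbv beta in E. rewrite Nat.add_comm, gpow_add in E.
  assert (Cwi : C (gpow G w i)) by (apply sg_pow; auto).
  assert (Cq : C (gpow G w (S d))) by (apply sg_pow; auto).
  destruct (rep_spec (gpow G w i) Cwi) as [_ Z1].
  destruct (rep_spec (gpow G w i * gpow G w (S d))) as [_ Z2]; [apply sgM; auto|].
  rewrite <- E in Z2.
  assert (Zq : Z (gpow G w (S d))).
  { replace (gpow G w (S d)) with
      (ginv (ginv (rep (gpow G w i)) * gpow G w i) * (ginv (rep (gpow G w i)) * (gpow G w i * gpow G w (S d))))
      by (gs; reflexivity).
    apply sgM; auto. apply sgV; auto. }
  assert (Hq : V (gpow G w (S d)) = gone) by (rewrite V_pow, Vw; auto; apply gpow_one).
  rewrite V_Zelt in Hq by auto.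
  destruct (HTcov gone) as (t0&Ht0&_); [apply sg1; auto|].
  destruct T as [|t1 T'] eqn:ET; [destruct Ht0|].
  simpl in Hq. apply TF in Hq. apply TF in Hq. exact Hq.
Qed.
End Transfer.

Section WithN.
Variable N : G -> Prop.
Hypothesis HNn : is_normal G N.

Definition Cn (g : G) : Prop := forall n, N n -> g * n = n * g.
Definition Zn (g : G) : Prop := Cn g /\ N g.

Lemma HNs : is_subgroup G N. Proof. apply HNn. Qed.

Lemma Cn_sg : is_subgroup G Cn.
Proof.
  split; [|split].
  - intros n _. rewrite mul1l, mul1r. reflexivity.
  - intros x y Hx Hy n Hn. rewrite mulA', Hy, gmulA, Hx, mulA' by auto. reflexivity.
  - intros x Hx n Hn. apply commute_inv. apply Hx; auto.
Qed.

Lemma Zn_sg : is_subgroup G Zn.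
Proof.
  pose proof HNs. pose proof Cn_sg.
  split; [|split].
  - split; apply sg1; auto.
  - intros x y [] []; split; apply sgM; auto.
  - intros x []; split; apply sgV; auto.
Qed.

Lemma exists_T (l : list G) : exists T,
  (forall t, In t T -> Cn t) /\ NoDup T /\
  (forall t t', In t T -> In t' T -> Zn (ginv t * t') -> t = t') /\
  (forall c, Cn c -> (exists s, In s l /\ N (ginv s * c)) -> exists t, In t T /\ Zn (ginv t * c)).
Proof.
  pose proof HNs as HN. pose proof Cn_sg as HC. pose proof Zn_sg as HZ.
  induction l as [|s l IH].
  - exists nil. split; [intros t []|split; [constructor|split; [intros t t' []|]]].
    intros c _ (s&[]&_).
  - destruct IH as (T&HT1&HT2&HT3&HT4).
    destruct (classic (exists c0, Cn c0 /\ N (ginv s * c0) /\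
                ~ (exists t, In t T /\ Zn (ginv t * c0)))) as [(c0&Hc0&Hs0&Hnc)|Hno].
    + exists (c0 :: T). split; [|split; [|split]].
      * intros t [<-|Ht]; auto.
      * constructor; auto. intros Hin. apply Hnc. exists c0. split; auto.
        rewrite mulVl. apply sg1; auto.
      * intros t t' [<-|Ht] [<-|Ht'] Hz; auto.
        -- exfalso; apply Hnc; exists t'; split; auto.
           replace (ginv t' * c0) with (ginv (ginv c0 * t')) by (gs; reflexivity).
           apply sgV; auto.
        -- exfalso; apply Hnc; exists t; auto.
      * intros c Hc (s'&[E|Hs']&Hs'c).
        -- subst s'.
           destruct (classic (exists t, In t T /\ Zn (ginv t * c))) as [(t&Ht&Hz)|Hnot].
           ++ exists t; split; [right|]; auto.
           ++ exists c0; split; [left; reflexivity|]. split.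
              ** apply sgM; [|apply sgV|]; auto.
              ** replace (ginv c0 * c) with (ginv (ginv s * c0) * (ginv s * c)) by (gs; reflexivity).
                 apply sgM; [|apply sgV|]; auto.
        -- destruct (HT4 c Hc) as (t&Ht&Hz). { exists s'; split; auto. }
           exists t; split; [right|]; auto.
    + exists T. split; [|split; [|split]]; auto.
      intros c Hc (s'&[E|Hs']&Hs'c).
      * subst s'. apply NNPP; intro Hnot. apply Hno. exists c; auto.
      * apply HT4; eauto.
Qed.

Lemma Cn_abelian (TF : torsion_free G) : finite_index G N -> forall a b, Cn a -> Cn b -> a * b = b * a.
Proof.
  intros [l Hl]. destruct (exists_T l) as (T&HT1&HT2&HT3&HT4).
  intros a b Ha Hb.
  apply (C_abelian Cn Zn T Cn_sg Zn_sg).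
  - intros z []; auto.
  - intros z c [_ Hz] Hc. symmetry. apply Hc; auto.
  - exact HT1.
  - exact HT2.
  - exact HT3.
  - intros c Hc. apply HT4; auto.
  - exact TF.
  - exact Ha.
  - exact Hb.
Qed.

Definition Mset (g : G) : Prop := exists n c, N n /\ Cn c /\ g = n * c.

Lemma Cn_central (TF : torsion_free G) (Hfi : finite_index G N) c m :
  Cn c -> Mset m -> c * m = m * c.
Proof.
  intros Hc (n&c'&Hn&Hc'&->).
  rewrite gmulA, (Hc n Hn), !mulA'. f_equal. apply Cn_abelian; auto.
Qed.

Lemma Mset_sg : is_subgroup G Mset.
Proof.
  pose proof HNs as HN. pose proof Cn_sg as HC.
  split; [|split].
  - exists gone, gone. split; [apply sg1; auto|split; [apply sg1; auto|]]. rewrite mul1l; reflexivity.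
  - intros x y (n&c&Hn&Hc&->) (n'&c'&Hn'&Hc'&->).
    exists (n * n'), (c * c'). split; [apply sgM; auto|split; [apply sgM; auto|]].
    rewrite !mulA'. f_equal. rewrite !gmulA. f_equal. apply Hc; auto.
  - intros x (n&c&Hn&Hc&->). exists (ginv n), (ginv c).
    split; [apply sgV; auto|split; [apply sgV; auto|]].
    rewrite inv_mul. apply (sgV _ c HC Hc). apply sgV; auto.
Qed.

Lemma comm_central_r (TF : torsion_free G) (Hfi : finite_index G N) x y c :
  Cn c -> Mset x -> Mset y -> comm G x (y * c) = comm G x y.
Proof.
  intros Hc Hx Hy. pose proof Mset_sg as HM.
  transitivity (ginv x * (ginv c * ((ginv y * (x * y)) * c))). { gs; reflexivity. }
  rewrite <- (Cn_central TF Hfi c (ginv y * (x * y))); auto.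
  - gs; reflexivity.
  - apply sgM; [|apply sgV|apply sgM]; auto.
Qed.

Lemma comm_central_l (TF : torsion_free G) (Hfi : finite_index G N) x y c :
  Cn c -> Mset x -> Mset y -> comm G (x * c) y = comm G x y.
Proof.
  intros Hc Hx Hy. rewrite comm_sym, comm_central_r, <- comm_sym; auto.
Qed.

Lemma M_nfn (TF : torsion_free G) : finite_index G N -> nilpotent G N -> nfn G Mset.
Proof.
  intros Hfi [_ [c Hc]]. pose proof HNs as HN. pose proof Cn_sg as HC. pose proof Mset_sg as HM.
  assert (NM : forall n, N n -> Mset n).
  { intros n Hn. exists n, gone. split; auto. split; [apply sg1; auto|]. rewrite mul1r; auto. }
  split; [split|split].
  - exact HM.
  - intros x g (n&c'&Hn&Hc'&->). exists (conj G n g), (conj G c' g).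
    split; [apply HNn; auto|split; [|apply conj_mul]].
    intros m Hm. rewrite <- (conj_back m g). rewrite <- !conj_mul. f_equal. apply Hc'.
    apply HNn; auto.
  - destruct Hfi as [l Hl]. exists l. intros g. destruct (Hl g) as (t&Ht&Hn). exists t; auto.
  - split; auto. exists (S c).
    assert (HL : forall j x, lcs G Mset (S j) x -> lcs G N (S j) x).
    { induction j; intros x Hx.
      - apply (Hx (lcs G N 1)). apply lcs_sg; auto.
        intros z (u&v&Hu&Hv&->). destruct Hu as (n&c1&Hn&Hc1&->). destruct Hv as (n'&c2&Hn'&Hc2&->).
        rewrite comm_central_l, comm_central_r; auto. apply lcs_gen; auto.
        exists n', c2; auto.
      - apply (Hx (lcs G N (S (S j)))). apply lcs_sg; auto.
        intros z (u&v&Hu&Hv&->). destruct Hv as (n'&c2&Hn'&Hc2&->).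
        assert (Mu : Mset u) by (apply (lcs_sub Mset (S j) HM); auto).
        rewrite comm_central_r; auto. apply lcs_gen; auto. }
    intros x Hx. apply (lcs_triv_S N c Hc). apply HL; auto.
Qed.

End WithN.

Lemma main_sec (N : G -> Prop) :
  torsion_free G -> virtually_nilpotent G -> maximal_nfn G N ->
  (forall x : G, finite_class G x -> centre G N x) /\
  (forall x : G, FC_centre G x <-> centre G N x).
Proof.
  intros TF _ [[HNn [Hfi Hnil]] Hmax].
  pose proof (HNs N HNn) as HN.
  assert (P1 : forall x, finite_class G x -> centre G N x).
  { intros x Hx.
    assert (Cx : Cn N x) by (intros n Hn; apply (fc_centralizes TF N HNn Hnil x Hx n Hn)).
    assert (MN : subset G (Mset N) N).
    { apply Hmax. apply M_nfn; auto.
      intros n Hn. exists n, gone. split; auto. split; [apply sg1, Cn_sg|]. rewrite mul1r; auto. }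
    split.
    - apply MN. exists gone, x. split; [apply sg1; auto|split; auto]. rewrite mul1l; auto.
    - intros y Hy. apply Cx; auto. }
  split; auto. intros x; split; [apply P1|].
  intros [Nx Cx]. destruct Hfi as [l Hl].
  exists (map (conj G x) l). intros g. destruct (Hl g) as (t&Ht&Hng).
  apply in_map_iff. exists t; split; auto.
  assert (Hn' : N (conj G (ginv t * g) (ginv t))) by (apply HNn; auto).
  assert (Hcx := Cx _ Hn').
  assert (E : conj G x t * (ginv t * g) = (ginv t * g) * conj G x t).
  { transitivity (ginv t * ((x * conj G (ginv t * g) (ginv t)) * t)). { gs; reflexivity. }
    rewrite Hcx. gs; reflexivity. }
  symmetry. transitivity (conj G (conj G x t) (ginv t * g)). { gs; reflexivity. }
  set (w := conj G x t) in *. unfold conj at 1. rewrite E. apply mulVl_r.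
Qed.

End Main.

Theorem lemma3p2 (G : group) (N : G -> Prop) :
  torsion_free G -> virtually_nilpotent G -> maximal_nfn G N ->
  (forall x : G, finite_class G x -> centre G N x) /\
  (forall x : G, FC_centre G x <-> centre G N x).
Proof. exact (main_sec G N). Qed.
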